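(* (i) If the language $L(\mathcal{A})$ accepted by the NFA $\mathcal{A}$ is finite, then $\mathcal{H}_\kappa(L_1,L_2)$ is regular. (ii) If $L(\mathcal{A})$ is infinite and either $L_1$ is finite or $L_2$ is finite, then $\mathcal{H}_\kappa(L_1,L_2)$ is not regular.
   Context: $\Sigma$ is a finite alphabet with at least two letters with an involution $a\mapsto\bar a$ ($\bar{\bar a}=a$), extended to words by $\overline{a_1\cdots a_m}=\bar a_m\cdots\bar a_1$ and to languages elementwise. $\kappa$ is a fixed positive integer. $\mathcal{H}_\kappa(L_1,L_2)=\{\gamma\alpha\beta\bar\alpha\bar\gamma:|\alpha|\ge\kappa,\ \gamma\alpha\beta\bar\alpha\in L_1\text{ or }\alpha\beta\bar\alpha\bar\gamma\in L_2\}$. $L_1,L_2$ are regular; $\mathcal{A}_1=(Q_1,\Sigma,E_1,\{q_{01}\},F_1)$ is a complete DFA accepting $L_1$, $\mathcal{A}_2=(Q_2,\Sigma,E_2,\{q_{02}\},F_2)$ a complete DFA accepting $\overline{L_2}$; $p\cdot w$ is the state reached from $p$ on $w$. Construction of $\mathcal{A}$: $Q_{12}=\{(q_{01}\cdot w,q_{02}\cdot w):w\in\Sigma^*\}$ with $(p_1,p_2)\cdot w=(p_1\cdot w,p_2\cdot w)$. For $(p_1,p_2,q_1,q_2)\in Q_1\times Q_2\times Q_1\times Q_2$ let $B(p_1,p_2,q_1,q_2)=\{w:p_1\cdot w=q_1,\ p_2\cdot\bar w=q_2\}$; the quadruple is a basic bridge if this set is nonempty. States of $\mathcal{A}$ are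 all $((p_1,p_2),q_1,q_2,\ell)$ with $(p_1,p_2)\in Q_{12}$, $q_i\in Q_i$, $\ell\in\{0,\dots,\kappa\}$, $(p_1,p_2,q_1,q_2)$ a basic bridge. For $a\in\Sigma$, $P\in Q_{12}$, $q_i\in Q_i$, there is an $a$-arc from $(P,q_1\cdot\bar a,q_2\cdot\bar a,\ell)$ to $(P\cdot a,q_1,q_2,\ell')$, provided both are states, exactly when: $\ell=\ell'=0$ and $q_1\cdot\bar a\notin F_1$, $q_2\cdot\bar a\notin F_2$; or $\ell=0,\ell'=1$ and ($q_1\cdot\bar a\in F_1$ or $q_2\cdot\bar a\in F_2$); or $1\le\ell<\kappa$ and $\ell'=\ell+1$. Initial states: $((q_{01},q_{02}),q_1',q_2',0)$; final states: those with $\ell=\kappa$. Finally, $\mathcal{A}$ is trimmed: states not reachable from an initial state, or from which no final state is reachable, are removed. *)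

(* Defs.v *)
From mathcomp Require Import all_boot.
Set Implicit Arguments. Unset Strict Implicit. Unset Printing Implicit Defensive.

Definition language (S : Type) := seq S -> Prop.

Definition finite_lang (S : eqType) (L : language S) : Prop :=
  exists s : seq (seq S), forall w, L w -> w \in s.

Definition wbar (S : Type) (bar : S -> S) (w : seq S) : seq S := rev (map bar w).

Record dfa (S : Type) := DFA {
  dstate : finType;
  dinit : dstate;
  dtrans : dstate -> S -> dstate;
  dfinal : {set dstate} }.

Definition dstar (S : Type) (A : dfa S) (p : dstate A) (w : seq S) : dstate A :=
  foldl (@dtrans S A) p w.

Definition dlang (S : Type) (A : dfa S) : language S :=
  fun w => dstar (dinit A) w \in dfinal A.

Definition regular (S : Type) (L : language S) : Prop :=
  exists A : dfa S, forall w, L w <-> dlang A w.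

Definition hairpin (S : Type) (bar : S -> S) (kappa : nat) (L1 L2 : language S)
  : language S :=
  fun w => exists g a b : seq S,
    w = g ++ a ++ b ++ wbar bar a ++ wbar bar g /\ kappa <= size a /\
    (L1 (g ++ a ++ b ++ wbar bar a) \/ L2 (a ++ b ++ wbar bar a ++ wbar bar g)).

(* The NFA construction A from A1 (accepting L1) and A2 (accepting bar L2). *)
Section Construction.
Variables (S : Type) (bar : S -> S) (kappa : nat) (A1 A2 : dfa S).

Definition Q12 (P : dstate A1 * dstate A2) : Prop :=
  exists w, P = (dstar (dinit A1) w, dstar (dinit A2) w).

Definition basic_bridge (p1 : dstate A1) (p2 : dstate A2)
  (q1 : dstate A1) (q2 : dstate A2) : Prop :=
  exists w, dstar p1 w = q1 /\ dstar p2 (wbar bar w) = q2.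

Definition nstate : Type := ((dstate A1 * dstate A2) * dstate A1 * dstate A2 * nat)%type.

Definition is_state (s : nstate) : Prop :=
  let: (P, q1, q2, l) := s in Q12 P /\ basic_bridge P.1 P.2 q1 q2 /\ l <= kappa.

Definition arc (a : S) (s t : nstate) : Prop :=
  exists (P : dstate A1 * dstate A2) (q1 : dstate A1) (q2 : dstate A2) (l l' : nat),
    s = (P, dtrans q1 (bar a), dtrans q2 (bar a), l) /\
    t = ((dtrans P.1 a, dtrans P.2 a), q1, q2, l') /\
    is_state s /\ is_state t /\
    [\/ [/\ l = 0, l' = 0, dtrans q1 (bar a) \notin dfinal A1
                          & dtrans q2 (bar a) \notin dfinal A2],
        [/\ l = 0, l' = 1 & (dtrans q1 (bar a) \in dfinal A1) \/
                            (dtrans q2 (bar a) \in dfinal A2)]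
      | [/\ 1 <= l, l < kappa & l' = l.+1]].

Definition initial_state (s : nstate) : Prop :=
  exists q1 q2, s = ((dinit A1, dinit A2), q1, q2, 0) /\ is_state s.

Definition final_state (s : nstate) : Prop := is_state s /\ s.2 = kappa.

Fixpoint accepts_from (s : nstate) (w : seq S) : Prop :=
  match w with
  | [::] => final_state s
  | a :: w' => exists t, arc a s t /\ accepts_from t w'
  end.

(* L(A): words labelling a path from an initial to a final state.
   (Trimming does not change the accepted language.) *)
Definition nfa_lang : language S :=
  fun w => exists s, initial_state s /\ accepts_from s w.

End Construction.

(* Main.v *)
Require Import Defs.
From mathcomp Require Import all_boot.
From Stdlib Require Import Classical ClassicalEpsilon.
From mathcomp Require Import zify.
Set Implicit Arguments. Unset Strict Implicit. Unset Printing Implicit Defensive.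

Section Basics.
Variable S : Type.
Variable bar : S -> S.
Hypothesis Hbar : involutive bar.

Lemma wbar_cat (u v : seq S) : wbar bar (u ++ v) = wbar bar v ++ wbar bar u.
Proof. by rewrite /wbar map_cat rev_cat. Qed.

Lemma wbarK : involutive (wbar bar).
Proof. by move=> u; rewrite /wbar map_rev revK -map_comp (eq_map Hbar) map_id. Qed.

Lemma wbar_cons a (u : seq S) : wbar bar (a :: u) = wbar bar u ++ [:: bar a].
Proof. by rewrite /wbar /= rev_cons cats1. Qed.

Lemma size_wbar (u : seq S) : size (wbar bar u) = size u.
Proof. by rewrite /wbar size_rev size_map. Qed.

Lemma wbar_inj : injective (wbar bar).
Proof. exact: can_inj wbarK. Qed.

Lemma take_wbar m (z : seq S) : take m (wbar bar z) = wbar bar (drop (size z - m) z).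
Proof. by rewrite /wbar take_rev size_map map_drop. Qed.

End Basics.

Lemma dstar_cat S (A : dfa S) (p : dstate A) u v : dstar p (u ++ v) = dstar (dstar p u) v.
Proof. exact: foldl_cat. Qed.

Lemma dstar_rcons S (A : dfa S) (p : dstate A) u a : dstar p (rcons u a) = dtrans (dstar p u) a.
Proof. exact: foldl_rcons. Qed.

Fixpoint ypow {S : Type} (y : seq S) (k : nat) : seq S :=
  if k is k'.+1 then y ++ ypow y k' else [::].

Lemma size_ypow S (y : seq S) k : size (ypow y k) = k * size y.
Proof. by elim: k => //= k IH; rewrite size_cat IH mulSn. Qed.

Lemma dstar_ypow S (A : dfa S) (q : dstate A) y k : dstar q y = q -> dstar q (ypow y k) = q.
Proof. by move=> Hq; elim: k => //= k IH; rewrite dstar_cat Hq IH. Qed.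

Lemma ypowS S (y : seq S) k : ypow y k.+1 = y ++ ypow y k.
Proof. by []. Qed.

Lemma ypowSr S (y : seq S) k : ypow y k.+1 = ypow y k ++ y.
Proof. elim: k => [|k IH] /=; first by rewrite cats0. by rewrite -catA -IH. Qed.

Lemma wbar_ypow S bar (y : seq S) k : wbar bar (ypow y k) = ypow (wbar bar y) k.
Proof.
elim: k => [|k IH]; first by [].
by rewrite ypowS wbar_cat IH -ypowSr.
Qed.

Definition fin_res (S : Type) (L : language S) :=
  exists (T : finType) (g : seq S -> T),
    forall x y, g x = g y -> forall v, L (x ++ v) <-> L (y ++ v).

Definition asb (P : Prop) : bool := if excluded_middle_informative P then true else false.
Lemma asbP (P : Prop) : asb P <-> P.
Proof. by rewrite /asb; case: excluded_middle_informative. Qed.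

Lemma fin_res_regular (S : Type) (L : language S) : fin_res L -> regular L.
Proof.
move=> [T [g Hg]].
pose rep (t : T) : seq S :=
  match excluded_middle_informative (exists x, g x = t) with
  | left H => proj1_sig (constructive_indefinite_description _ H)
  | right _ => [::] end.
have Hrep x : g (rep (g x)) = g x.
  rewrite /rep; case: excluded_middle_informative => [H|H]; last by case: H; exists x.
  by case: constructive_indefinite_description.
pose D := DFA (g [::]) (fun t a => g (rcons (rep t) a)) [set t | asb (L (rep t))].
have Inv w : exists x, dstar (dinit D) w = g x /\ forall v, L (x ++ v) <-> L (w ++ v).
  elim/last_ind: w => [|w a [x [Hx Hxv]]]; first by exists [::].
  exists (rcons (rep (g x)) a); split; first by rewrite dstar_rcons Hx.
  move=> v; rewrite !cat_rcons (Hg _ _ (Hrep x)) Hxv //.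
exists D => w; rewrite /dlang; have [x [-> Hx]] := Inv w.
rewrite inE asbP -[rep _]cats0 (Hg _ _ (Hrep x) [::]) Hx cats0; by [].
Qed.

Lemma fin_res_ext S (L L' : language S) : (forall w, L w <-> L' w) -> fin_res L -> fin_res L'.
Proof.
move=> E [T [g Hg]]; exists T, g => x y H v; rewrite -!E; exact: Hg.
Qed.

Lemma fin_res_empty S : fin_res (fun _ : seq S => False).
Proof. by exists unit, (fun _ => tt). Qed.

Lemma fin_res_union S (L1 L2 : language S) :
  fin_res L1 -> fin_res L2 -> fin_res (fun w => L1 w \/ L2 w).
Proof.
move=> [T1 [g1 H1]] [T2 [g2 H2]]; exists (T1 * T2)%type, (fun x => (g1 x, g2 x)).
move=> x y [/H1 E1 /H2 E2] v; by rewrite E1 E2.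
Qed.

Lemma fin_res_consl (S : finType) (a : S) (B : language S) :
  fin_res B -> fin_res (fun w => exists v, w = a :: v /\ B v).
Proof.
move=> [T [g Hg]].
exists (option (bool * T)), (fun x => if x is b :: x' then Some (b == a, g x') else None).
have E z v : (exists v', z ++ v = a :: v' /\ B v') <->
    (if z is b :: z' then b = a /\ B (z' ++ v) else exists v', v = a :: v' /\ B v').
  case: z => [//|b z] /=; split; first by move=> [v' [[-> <-] H]].
  by move=> [-> H]; exists (z ++ v).
move=> x y Hxy v; rewrite !E.
case: x Hxy => [|b x]; case: y => [|c y] //= [].
move=> Hbc Hgy.
case: (eqVneq b a) Hbc => [-> | Hba].
  by move=> /esym/eqP ->; rewrite (Hg _ _ Hgy).
move=> Hca; have Hca' : c != a by rewrite -Hca.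
split=> [[Hb _]|[Hc _]]; first by rewrite Hb eqxx in Hba.
by rewrite Hc eqxx in Hca'.
Qed.

Lemma fin_res_rcons (S : Type) (a : S) (B : language S) :
  fin_res B -> fin_res (fun w => exists v, w = rcons v a /\ B v).
Proof.
move=> [T [g Hg]].
exists (T * bool)%type, (fun x => (g x, asb (exists v, x = rcons v a /\ B v))).
have E z v' b : (exists v, z ++ rcons v' b = rcons v a /\ B v) <-> b = a /\ B (z ++ v').
  split.
    move=> [v [E HB]]; move: E; rewrite -rcons_cat => /rcons_inj [E1 E2].
    by rewrite E1 E2.
  by move=> [-> H]; exists (z ++ v'); rewrite -rcons_cat.
move=> x y [/Hg Hxy Hf] v; case/lastP: v => [|v b].
  rewrite !cats0; split=> H; apply/asbP; [rewrite -Hf | rewrite Hf]; exact/asbP.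
by rewrite !E Hxy.
Qed.

Lemma fin_res_catl (S : finType) (u : seq S) (B : language S) :
  fin_res B -> fin_res (fun w => exists v, w = u ++ v /\ B v).
Proof.
move=> HB; elim: u => [|a u IH].
  by apply: fin_res_ext HB => w; split; [move=> H; exists w | move=> [v [-> H]]].
apply: fin_res_ext (fin_res_consl a IH) => w; split.
  by move=> [v [-> [v' [-> H]]]]; exists v'.
by move=> [v [-> H]]; exists (u ++ v); split=> //; exists v.
Qed.

Lemma fin_res_catr (S : Type) (z : seq S) (B : language S) :
  fin_res B -> fin_res (fun w => exists v, w = v ++ z /\ B v).
Proof.
move=> HB; elim/last_ind: z => [|z a IH].
  by apply: fin_res_ext HB => w; split; [move=> H; exists w; rewrite cats0 | move=> [v [-> H]]; rewrite cats0].
apply: fin_res_ext (fin_res_rcons a IH) => w; split.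
  by move=> [v [-> [v' [-> H]]]]; exists v'; rewrite rcons_cat.
by move=> [v [-> H]]; exists (v ++ z); rewrite rcons_cat; split=> //; exists v.
Qed.

Lemma fin_res_B (S : Type) bar (A1 A2 : dfa S) (p1 : dstate A1) (p2 : dstate A2) e :
  fin_res (fun b => (dstar p1 (b ++ e) \in dfinal A1) || (dstar p2 (wbar bar b ++ e) \in dfinal A2)).
Proof.
exists (dstate A1 * {ffun dstate A2 -> bool})%type,
  (fun x => (dstar p1 x, [ffun q => dstar q (wbar bar x ++ e) \in dfinal A2])).
move=> x y [E1 E2] v.
have K z : (dstar p1 ((z ++ v) ++ e) \in dfinal A1) || (dstar p2 (wbar bar (z ++ v) ++ e) \in dfinal A2)
  = (dstar (dstar p1 z) (v ++ e) \in dfinal A1) ||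
    [ffun q => dstar q (wbar bar z ++ e) \in dfinal A2] (dstar p2 (wbar bar v)).
  by rewrite ffunE wbar_cat !dstar_cat.
by rewrite !K E1 E2.
Qed.

Lemma fin_res_bigU (S : Type) (X : eqType) (s : seq X) (F : X -> language S) :
  (forall x, x \in s -> fin_res (F x)) -> fin_res (fun w => exists x, x \in s /\ F x w).
Proof.
elim: s => [|x s IH] H.
  by apply: fin_res_ext (@fin_res_empty S) => w; split=> // [[x []]].
have H' : forall y, y \in s -> fin_res (F y) by move=> y Hy; apply: H; rewrite inE Hy orbT.
have U := fin_res_union (H x (mem_head x s)) (IH H').
apply: fin_res_ext U => w /=.
split.
  by move=> [Hx|[y [Hy Hw]]]; [exists x; rewrite mem_head | exists y; rewrite inE Hy orbT].
move=> [y []]; rewrite inE => /orP [/eqP -> | Hy] Hw; [by left | right; by exists y].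
Qed.

Section NFA.
Variable S : Type.
Variable bar : S -> S.
Hypothesis Hbar : involutive bar.
Variable kappa : nat.
Hypothesis Hkappa : 0 < kappa.
Variables A1 A2 : dfa S.

Local Notation wb := (wbar bar).

Definition c12 (p1 : dstate A1) (p2 : dstate A2) (w v : seq S) (i : nat) : bool :=
  (dstar p1 (v ++ w ++ wb (drop i v)) \in dfinal A1) ||
  (dstar p2 (v ++ wb w ++ wb (drop i v)) \in dfinal A2).

Definition cnt p1 p2 w v l : Prop :=
  if l == 0 then [/\ kappa <= size v, c12 p1 p2 w v (size v - kappa) &
                    forall i, i < size v - kappa -> ~~ c12 p1 p2 w v i]
  else l + size v = kappa.

Lemma qstep (A : dfa S) (p : dstate A) a v w :
  dstar p ((a :: v) ++ w ++ wb (a :: v)) = dtrans (dstar (dtrans p a) (v ++ w ++ wb v)) (bar a).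
Proof. by rewrite wbar_cons !catA cats1 dstar_rcons -!catA. Qed.

Lemma qstep' (A : dfa S) (p : dstate A) a v w :
  dstar p (v ++ w ++ wb (a :: v)) = dtrans (dstar p (v ++ w ++ wb v)) (bar a).
Proof. by rewrite wbar_cons !catA cats1 dstar_rcons -!catA. Qed.

Lemma c12_0 p1 p2 w a v :
  c12 p1 p2 w (a :: v) 0 =
  (dstar p1 ((a :: v) ++ w ++ wb (a :: v)) \in dfinal A1) ||
  (dstar p2 ((a :: v) ++ wb w ++ wb (a :: v)) \in dfinal A2).
Proof. by []. Qed.

Lemma c12S p1 p2 w a v i :
  c12 p1 p2 w (a :: v) i.+1 = c12 (dtrans p1 a) (dtrans p2 a) w v i.
Proof. by []. Qed.

Lemma acc_inv (v : seq S) : forall P q1 q2 l,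
  @accepts_from S bar kappa A1 A2 (P, q1, q2, l) v ->
  exists w, [/\ q1 = dstar P.1 (v ++ w ++ wb v),
                q2 = dstar P.2 (v ++ wb w ++ wb v) & cnt P.1 P.2 w v l].
Proof.
elim: v => [|a v IH] P q1 q2 l /=.
  move=> [[HQ [[w [E1 E2]] Hl]] /= ->]; exists w; rewrite /cnt /= !cats0.
  by split=> //; rewrite (negbTE (lt0n_neq0 Hkappa)) addn0.
move=> [t [[P' [q1' [q2' [l0 [l' [Es [Et [_ [_ Hc]]]]]]]]] Hacc]].
case: Es => -> -> -> ->; subst t.
have [w [E1 E2 Hcnt]] := IH _ _ _ _ Hacc.
exists w; split.
- by rewrite qstep' E1.
- by rewrite qstep' E2.
case: Hc => [[El0 El' N1 N2]|[El0 El' F12]|[Hl1 Hlk El']]; subst l' => //; try subst l0; rewrite /cnt /=.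
- move: Hcnt; rewrite /cnt /= => -[Hk Hc Hn].
  have -> : (size v).+1 - kappa = (size v - kappa).+1 by rewrite subSn.
  split; [by apply: leqW | by rewrite c12S |].
  case=> [|i] Hi; last by rewrite c12S; apply: Hn.
  by rewrite c12_0 !qstep -E1 -E2 (negbTE N1) (negbTE N2).
- move: Hcnt; rewrite /cnt /= add1n => Hk.
  rewrite -Hk subnn; split=> // ; rewrite c12_0 !qstep -E1 -E2.
  by case: F12 => ->; rewrite ?orbT.
- move: Hcnt; rewrite /cnt /= => Hk.
  by rewrite (negbTE (lt0n_neq0 Hl1)) addnS -addSn.
Qed.

Lemma is_state_mk (p1 : dstate A1) (p2 : dstate A2) w v l :
  @Q12 S A1 A2 (p1, p2) -> l <= kappa ->
  @is_state S bar kappa A1 A2 ((p1, p2), dstar p1 (v ++ w ++ wb v), dstar p2 (v ++ wb w ++ wb v), l).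
Proof.
move=> HQ Hl; split=> //; split=> //.
exists (v ++ w ++ wb v); split=> //=.
by rewrite !wbar_cat wbarK // catA.
Qed.

Lemma Q12_step (p1 : dstate A1) (p2 : dstate A2) a :
  @Q12 S A1 A2 (p1, p2) -> @Q12 S A1 A2 (dtrans p1 a, dtrans p2 a).
Proof. by move=> [z [-> ->]]; exists (rcons z a); rewrite !dstar_rcons. Qed.

Lemma acc_build (v : seq S) : forall p1 p2 w l,
  @Q12 S A1 A2 (p1, p2) -> l <= kappa -> cnt p1 p2 w v l ->
  @accepts_from S bar kappa A1 A2
    ((p1, p2), dstar p1 (v ++ w ++ wb v), dstar p2 (v ++ wb w ++ wb v), l) v.
Proof.
elim: v => [|a v IH] p1 p2 w l HQ Hl.
  rewrite /cnt /=; case: eqP => [_ [Hk _ _]|_ Hk].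
    by move: Hkappa; rewrite leqn0 in Hk; rewrite (eqP Hk).
  split; last by rewrite /= -Hk addn0.
  exact: (is_state_mk w [::] HQ Hl).
move=> Hc.
have HQ' := Q12_step a HQ.
have Hs := is_state_mk w (a :: v) HQ Hl.
have Harc : forall l', l' <= kappa -> cnt (dtrans p1 a) (dtrans p2 a) w v l' ->
   [\/ [/\ l = 0, l' = 0, dtrans (dstar (dtrans p1 a) (v ++ w ++ wb v)) (bar a) \notin dfinal A1
                          & dtrans (dstar (dtrans p2 a) (v ++ wb w ++ wb v)) (bar a) \notin dfinal A2],
        [/\ l = 0, l' = 1 & (dtrans (dstar (dtrans p1 a) (v ++ w ++ wb v)) (bar a) \in dfinal A1) \/
                            (dtrans (dstar (dtrans p2 a) (v ++ wb w ++ wb v)) (bar a) \in dfinal A2)]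
      | [/\ 1 <= l, l < kappa & l' = l.+1]] ->
   @accepts_from S bar kappa A1 A2
    ((p1, p2), dstar p1 ((a :: v) ++ w ++ wb (a :: v)), dstar p2 ((a :: v) ++ wb w ++ wb (a :: v)), l) (a :: v).
  move=> l' Hl' Hc' Hcase.
  exists ((dtrans p1 a, dtrans p2 a), dstar (dtrans p1 a) (v ++ w ++ wb v),
          dstar (dtrans p2 a) (v ++ wb w ++ wb v), l'); split; last exact: IH.
  exists (p1, p2), (dstar (dtrans p1 a) (v ++ w ++ wb v)),
         (dstar (dtrans p2 a) (v ++ wb w ++ wb v)), l, l'.
  split; first by rewrite !qstep.
  split=> //; split; first exact: (is_state_mk w (a :: v) HQ Hl).
  by split; first exact: (is_state_mk w v HQ' Hl').
move: Hc; rewrite /cnt; case: eqP => [El [Hk Hc Hn] | Nl Hk].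
  subst l; case: (ltngtP (size v).+1 kappa) Hk => // [Hlt | Heq] Hk.
    apply: (Harc 0) => //.
      rewrite /cnt /=; split.
      - by rewrite -ltnS.
      - by move: Hc; rewrite /= subSn // c12S.
      - by move=> i Hi; rewrite -c12S; apply: Hn; rewrite /= subSn.
    have := Hn 0; rewrite subn_gt0 => /(_ Hlt).
    by rewrite c12_0 !qstep negb_or => /andP [N1 N2]; constructor 1.
  apply: (Harc 1) => //.
  move: Hc; rewrite /= -Heq subnn c12_0 !qstep => /orP H.
  by constructor 2.
apply: (Harc l.+1).
- by move: Hk => /=; lia.
- by rewrite /cnt /=; move: Hk => /=; lia.
constructor 3; split=> //; move: Hk Nl => /=; lia.
Qed.

Lemma nfa_langE u :
  nfa_lang bar kappa A1 A2 u <-> exists w, cnt (dinit A1) (dinit A2) w u 0.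
Proof.
split.
  move=> [s [[q1 [q2 [Es _]]] Hacc]]; subst s.
  by have [w [_ _ H]] := acc_inv Hacc; exists w.
move=> [w Hw].
have HQ : @Q12 S A1 A2 (dinit A1, dinit A2) by exists [::].
exists ((dinit A1, dinit A2), dstar (dinit A1) (u ++ w ++ wb u), dstar (dinit A2) (u ++ wb w ++ wb u), 0).
split; last exact: acc_build.
by do 2 eexists; split; last exact: (is_state_mk w u HQ (leq0n _)).
Qed.

End NFA.

Section Part1.
Variable S : finType.
Variable bar : S -> S.
Hypothesis Hbar : involutive bar.
Variable kappa : nat.
Hypothesis Hkappa : 0 < kappa.
Variables (L1 L2 : language S) (A1 A2 : dfa S).
Hypothesis HA1 : forall w, dlang A1 w <-> L1 w.
Hypothesis HA2 : forall w, dlang A2 w <-> exists v, L2 v /\ w = wbar bar v.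

Local Notation wb := (wbar bar).
Local Notation condS u b i := (c12 bar (dinit A1) (dinit A2) b u i).

Lemma L2E z : L2 z <-> dlang A2 (wb z).
Proof.
split; first by move=> H; apply/HA2; exists z.
by move/HA2 => [v [Hv /(wbar_inj Hbar) ->]].
Qed.

Lemma hairpin_norm w : hairpin bar kappa L1 L2 w ->
  exists u b, [/\ w = u ++ b ++ wb u, kappa <= size u & condS u b (size u - kappa)].
Proof.
move=> [g [a [b [-> [Ha HL]]]]].
have Ea := cat_take_drop kappa a.
set a1 := take kappa a in Ea; set a2 := drop kappa a in Ea.
have Sa1 : size a1 = kappa by rewrite size_take; case: ltngtP Ha => // -> .
exists (g ++ a1), (a2 ++ b ++ wb a2).
have Hs : size (g ++ a1) - kappa = size g by rewrite size_cat Sa1 addnK.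
rewrite /c12 Hs drop_size_cat //; split.
- by rewrite -Ea !wbar_cat -!catA.
- by rewrite size_cat Sa1 leq_addl.
case: HL => [/HA1 | /L2E] H; apply/orP; [left | right]; move: H; rewrite /dlang.
  by rewrite -Ea !wbar_cat -!catA.
by rewrite -Ea !wbar_cat !wbarK // -!catA.
Qed.

Lemma minimize n : forall u b, size u <= n -> kappa <= size u ->
  condS u b (size u - kappa) ->
  exists u' b', u ++ b ++ wb u = u' ++ b' ++ wb u' /\ cnt bar kappa (dinit A1) (dinit A2) b' u' 0.
Proof.
elim: n => [|n IH] u b Hn Hk Hc.
  by move: (leq_trans Hk Hn) Hkappa; rewrite leqn0 => /eqP ->.
case: (classic (exists i, i < size u - kappa /\ condS u b i)) => [[i [Hi Hci]] | Hno].
  have Eu := cat_take_drop (i + kappa) u.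
  set u1 := take (i + kappa) u in Eu; set d := drop (i + kappa) u in Eu.
  have Su1 : size u1 = i + kappa by rewrite size_take; case: ltnP => //; lia.
  have [u' [b' [E1 E2]]] : exists u' b', u1 ++ (d ++ b ++ wb d) ++ wb u1 = u' ++ b' ++ wb u' /\
        cnt bar kappa (dinit A1) (dinit A2) b' u' 0.
    apply: IH; rewrite ?Su1; [lia | lia |].
    rewrite addnK; move: Hci; rewrite /c12 -Eu drop_cat Su1.
    have -> : i < i + kappa by lia.
    by rewrite !wbar_cat !wbarK // -!catA.
  exists u', b'; split=> //; rewrite -E1 -{1 2}Eu !wbar_cat -!catA //.
exists u, b; split=> //; rewrite /cnt /=; split=> // i Hi.
by apply/negP => Hci; apply: Hno; exists i.
Qed.

Lemma part1 : finite_lang (nfa_lang bar kappa A1 A2) -> regular (hairpin bar kappa L1 L2).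
Proof.
move=> [s0 Hs0].
pose F (u : seq S) (w : seq S) := kappa <= size u /\ exists b, w = u ++ b ++ wb u /\ condS u b (size u - kappa).
apply: fin_res_regular.
apply: (@fin_res_ext _ (fun w => exists u : seq S, u \in s0 /\ F u w)).
  move=> w; split.
    move=> [u [_ [Hk [b [-> Hc]]]]].
    have Sd : size (drop (size u - kappa) u) = kappa by rewrite size_drop; lia.
    have Eu := cat_take_drop (size u - kappa) u.
    move: Hc; rewrite /c12.
    set t := take _ u in Eu Sd *; set d := drop _ u in Eu Sd * => Hc.
    exists t, d, b.
    split; first by rewrite -{1 2}Eu wbar_cat -!catA.
    split; first by rewrite Sd.
    case/orP: Hc => H; [left; apply/HA1 | right; apply/L2E]; move: H; rewrite /dlang.
      by rewrite -{1}Eu -!catA.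
    by rewrite !wbar_cat -{1}Eu -!catA !wbarK.
  move=> /hairpin_norm [u [b [Ew Hk Hc]]].
  have [u' [b' [E Hcnt]]] := minimize (leqnn (size u)) Hk Hc.
  exists u'; split; first by apply: Hs0; apply/nfa_langE => //; exists b'.
  by move: Hcnt; rewrite /cnt /= => -[Hk' Hc' _]; split=> //; exists b'; rewrite Ew E.
apply: fin_res_bigU => u _.
case: (leqP kappa (size u)) => Hk; last first.
  by apply: fin_res_ext (@fin_res_empty S) => w; split=> // [[H _]]; move: H; rewrite leqNgt Hk.
have HB := fin_res_B bar (dstar (dinit A1) u) (dstar (dinit A2) u) (wb (drop (size u - kappa) u)).
apply: fin_res_ext (fin_res_catl u (fin_res_catr (wb u) HB)) => w; split.
  move=> [v [-> [b [-> Hb]]]]; split=> //; exists b; split=> //.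
  by move: Hb; rewrite /c12 -!dstar_cat.
move=> [_ [b [-> Hb]]]; exists (b ++ wb u); split=> //; exists b; split=> //.
by move: Hb; rewrite /c12 -!dstar_cat.
Qed.

End Part1.

Lemma pigeon_nat (T : finType) (f : nat -> T) (n : nat) :
  #|T| < n -> exists i j, i < j < n /\ f i = f j.
Proof.
move=> Hn.
pose g := fun i : 'I_n => f (val i).
have : ~~ injectiveb g.
  apply/negP => /injectiveP Hg; have := @leq_card _ _ g Hg.
  by rewrite card_ord leqNgt Hn.
move/injectivePn => [i [j Hij Eij]].
case: (ltngtP (val i) (val j)) => [H|H|H].
- by exists i, j; rewrite H ltn_ord.
- by exists j, i; rewrite H ltn_ord.
- by move: Hij; rewrite (val_inj H) eqxx.
Qed.

Lemma take_min (T : Type) n (t : seq T) : exists2 m, m <= size t & take n t = take m t.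
Proof.
case: (leqP n (size t)) => H; first by exists n.
by exists (size t) => //; rewrite take_oversize ?(ltnW H) // take_size.
Qed.

Lemma take_ypow S (A : dfa S) (Q : dstate A) z t l : dstar Q z = Q -> forall n,
  (exists2 m, m <= size z & dstar Q (take n (ypow z l ++ t)) = dstar Q (take m z)) \/
  (exists2 m, m <= size t & dstar Q (take n (ypow z l ++ t)) = dstar Q (take m t)).
Proof.
move=> Hz; elim: l => [|l IH] n.
  by right; have [m Hm E] := take_min n t; exists m => //=; rewrite E.
rewrite ypowS -catA take_cat; case: ltnP => H.
  by left; exists n => //; apply: ltnW.
by rewrite dstar_cat Hz; apply: IH.
Qed.

Section Prefix.
Variable S : Type.
Variable bar : S -> S.
Hypothesis Hbar : involutive bar.
Local Notation wb := (wbar bar).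

Lemma drop_addn_cat (s t : seq S) k : drop (size s + k) (s ++ t) = drop k t.
Proof. by rewrite drop_cat ltnNge leq_addr /= addKn. Qed.

Lemma prefix_nonfinal (A : dfa S) (q0 : dstate A) x y r b k l K :
  dstar (dstar q0 x) y = dstar q0 x ->
  dstar (dstar (dstar q0 (x ++ r ++ b)) (wb r)) (wb y) = dstar (dstar q0 (x ++ r ++ b)) (wb r) ->
  (forall m, K < m <= size r -> dstar (dstar q0 (x ++ r ++ b)) (take m (wb r)) \notin dfinal A) ->
  (forall m, m <= size y -> dstar (dstar (dstar q0 (x ++ r ++ b)) (wb r)) (take m (wb y)) \notin dfinal A) ->
  (forall m, m <= size x -> dstar (dstar (dstar q0 (x ++ r ++ b)) (wb r)) (take m (wb x)) \notin dfinal A) ->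
  forall n, size x + k * size y + size r + size b + K < n ->
  dstar q0 (take n (x ++ ypow y k ++ r ++ b ++ wb r ++ ypow (wb y) l ++ wb x)) \notin dfinal A.
Proof.
set qn := dstar q0 (x ++ r ++ b); set Q := dstar qn (wb r).
move=> Hy HQ N1 N2 N3 n Hn.
have -> : x ++ ypow y k ++ r ++ b ++ wb r ++ ypow (wb y) l ++ wb x =
          (x ++ ypow y k ++ r ++ b) ++ (wb r ++ ypow (wb y) l ++ wb x) by rewrite -!catA.
have Sz : size (x ++ ypow y k ++ r ++ b) = size x + k * size y + size r + size b.
  by rewrite !size_cat size_ypow !addnA.
rewrite take_cat Sz ltnNge (leq_trans (leq_addr K _) (ltnW Hn)) /= dstar_cat.
have -> : dstar q0 (x ++ ypow y k ++ r ++ b) = qn.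
  by rewrite /qn !dstar_cat dstar_ypow.
rewrite take_cat size_wbar; case: ltnP => H1.
  by apply: N1; rewrite (ltnW H1) andbT; lia.
rewrite dstar_cat -/Q.
have := @take_ypow S A Q (wb y) (wb x) l HQ (n - (size x + k * size y + size r + size b) - size r).
move=> [[m Hm ->] | [m Hm ->]]; [apply: N2 | apply: N3]; by rewrite -(size_wbar bar).
Qed.

Lemma no_long_prefix (kappa : nat) (A : dfa S) (q0 : dstate A) x y r b :
  kappa < size r ->
  dstar (dstar q0 x) y = dstar q0 x ->
  dstar (dstar (dstar q0 (x ++ y ++ r ++ b)) (wb r)) (wb y) = dstar (dstar q0 (x ++ y ++ r ++ b)) (wb r) ->
  (forall i, i < size (x ++ y ++ r) - kappa ->
     dstar q0 ((x ++ y ++ r) ++ b ++ wb (drop i (x ++ y ++ r))) \notin dfinal A) ->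
  forall k l n, size x + k * size y + size r + size b + kappa < n ->
  dstar q0 (take n (x ++ ypow y k ++ r ++ b ++ wb r ++ ypow (wb y) l ++ wb x)) \notin dfinal A.
Proof.
move=> Hr Hy.
have Eq : dstar q0 (x ++ y ++ r ++ b) = dstar q0 (x ++ r ++ b) by rewrite !dstar_cat Hy.
rewrite Eq => HQ Hn k l.
have Hs : size (x ++ y ++ r) - kappa = size x + size y + (size r - kappa).
  by rewrite !size_cat; lia.
apply: prefix_nonfinal => //.
- move=> m /andP [Hm1 Hm2].
  have := Hn (size x + size y + (size r - m)); rewrite Hs.
  have -> : size x + size y + (size r - m) < size x + size y + (size r - kappa) by lia.
  have -> : drop (size x + size y + (size r - m)) (x ++ y ++ r) = drop (size r - m) r.
    by rewrite -size_cat catA drop_addn_cat.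
  move=> /(_ isT).
  by rewrite take_wbar !dstar_cat Hy.
- move=> m Hm.
  have := Hn (size x + (size y - m)); rewrite Hs.
  have -> : size x + (size y - m) < size x + size y + (size r - kappa) by lia.
  move=> /(_ isT); rewrite drop_addn_cat drop_cat.
  case: ltnP => Hym.
    by rewrite take_wbar wbar_cat !dstar_cat Hy.
  have Em : m = 0 by lia.
  by rewrite Em take0 /= !dstar_cat Hy subn0 subnn drop0.
- move=> m Hm.
  have := Hn (size x - m); rewrite Hs.
  have -> : size x - m < size x + size y + (size r - kappa) by lia.
  move=> /(_ isT); rewrite drop_cat.
  case: ltnP => Hxm.
    by move: HQ; rewrite take_wbar !wbar_cat !dstar_cat => HQ; rewrite Hy HQ.
  have Em : m = 0 by lia.
  move: HQ; rewrite Em take0 /= !dstar_cat => HQ.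
  have -> : size x - 0 - size x = 0 by lia.
  by rewrite drop0 wbar_cat !dstar_cat Hy HQ.
Qed.
End Prefix.

Lemma fin_bound (S : eqType) (L : language S) : finite_lang L -> exists M, forall w, L w -> size w <= M.
Proof.
move=> [s Hs]; exists (foldr (fun w m => maxn (size w) m) 0 s) => w /Hs.
elim: s {Hs} => //= v s IH; rewrite inE => /orP [/eqP -> | /IH H].
  exact: leq_maxl.
exact: leq_trans H (leq_maxr _ _).
Qed.

Lemma words_upto (S : finType) n : exists s : seq (seq S), forall w, size w <= n -> w \in s.
Proof.
elim: n => [|n [s Hs]].
  by exists [:: [::]] => w; rewrite leqn0 size_eq0 => /eqP ->; rewrite mem_head.
exists ([::] :: [seq a :: w | a <- enum S, w <- s]) => [[|a w]] Hw; first by rewrite mem_head.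
by rewrite inE; apply/orP; right; apply: allpairs_f; [rewrite mem_enum | apply: Hs].
Qed.

Lemma long_word (S : finType) (L : language S) : ~ finite_lang L -> forall N, exists u, L u /\ N <= size u.
Proof.
move=> Hinf N; apply: NNPP => Hno; apply: Hinf.
have [s Hs] := words_upto S N.
exists s => w Hw; apply: Hs; rewrite leqNgt; apply/negP => H; apply: Hno.
by exists w; split=> //; apply: ltnW.
Qed.

Section Part2.
Variable S : finType.
Variable bar : S -> S.
Hypothesis Hbar : involutive bar.
Variable kappa : nat.
Hypothesis Hkappa : 0 < kappa.
Variables (L1 L2 : language S) (A1 A2 : dfa S).
Hypothesis HA1 : forall w, dlang A1 w <-> L1 w.
Hypothesis HA2 : forall w, dlang A2 w <-> exists v, L2 v /\ w = wbar bar v.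

Local Notation wb := (wbar bar).
Local Notation q01 := (dinit A1).
Local Notation q02 := (dinit A2).

Definition W (x y r b : seq S) k l := x ++ ypow y k ++ r ++ b ++ wb r ++ ypow (wb y) l ++ wb x.

Lemma Wwb x y r b k l : wb (W x y r b k l) = W x y r (wb b) l k.
Proof. by rewrite /W !wbar_cat !wbar_ypow !wbarK // -!catA. Qed.

Lemma size_W x y r b k l :
  size (W x y r b k l) = (size x + size r) * 2 + (k + l) * size y + size b.
Proof. rewrite /W !size_cat !size_ypow !size_wbar mulnDl; lia. Qed.

Lemma W_split x y r b k l : W x y r b k l = (x ++ ypow y k) ++ (r ++ b ++ wb r ++ ypow (wb y) l ++ wb x).
Proof. by rewrite /W -catA. Qed.

Lemma size_hp (g a b0 : seq S) : size (g ++ a ++ b0 ++ wb a ++ wb g) = size g * 2 + size a * 2 + size b0.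
Proof. rewrite !size_cat !size_wbar; lia. Qed.

Lemma core x y r b : 0 < size y -> kappa < size r ->
  dstar (dstar q01 x) y = dstar q01 x ->
  dstar (dstar q02 x) y = dstar q02 x ->
  dstar (dstar (dstar q01 (x ++ y ++ r ++ b)) (wb r)) (wb y) = dstar (dstar q01 (x ++ y ++ r ++ b)) (wb r) ->
  dstar (dstar (dstar q02 (x ++ y ++ r ++ wb b)) (wb r)) (wb y) = dstar (dstar q02 (x ++ y ++ r ++ wb b)) (wb r) ->
  c12 bar q01 q02 b (x ++ y ++ r) (size (x ++ y ++ r) - kappa) ->
  (forall i, i < size (x ++ y ++ r) - kappa -> ~~ c12 bar q01 q02 b (x ++ y ++ r) i) ->
  finite_lang L1 \/ finite_lang L2 -> ~ regular (hairpin bar kappa L1 L2).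
Proof.
move=> Hy0 Hr P1 P2 Q1 Q2 Hc Hn Hfin [D HD].
have Hn1 : forall i, i < size (x ++ y ++ r) - kappa ->
    dstar q01 ((x ++ y ++ r) ++ b ++ wb (drop i (x ++ y ++ r))) \notin dfinal A1.
  by move=> i /Hn; rewrite /c12 negb_or => /andP [].
have Hn2 : forall i, i < size (x ++ y ++ r) - kappa ->
    dstar q02 ((x ++ y ++ r) ++ wb b ++ wb (drop i (x ++ y ++ r))) \notin dfinal A2.
  by move=> i /Hn; rewrite /c12 negb_or => /andP [].
have NP1 := no_long_prefix Hr P1 Q1 Hn1.
have NP2 := no_long_prefix Hr P2 Q2 Hn2.
have Win : forall k, hairpin bar kappa L1 L2 (W x y r b k k).
  move=> k.
  have Er := cat_take_drop (size r - kappa) r.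
  have Hm : size (x ++ y ++ r) - kappa = size x + size y + (size r - kappa) by rewrite !size_cat; lia.
  have Hd : drop (size (x ++ y ++ r) - kappa) (x ++ y ++ r) = drop (size r - kappa) r.
    by rewrite Hm -size_cat catA drop_addn_cat.
  move: Hc; rewrite /c12 Hd.
  set rho := take _ r in Er *; set al := drop _ r in Er * => Hc.
  exists (x ++ ypow y k ++ rho), al, b; split.
    by rewrite /W -Er !wbar_cat wbar_ypow -!catA.
  split; first by rewrite /al size_drop; lia.
  case/orP: Hc => H; [left; apply/HA1 | right; apply/(L2E Hbar HA2)]; move: H; rewrite /dlang.
    by rewrite -{1}Er !dstar_cat P1 dstar_ypow.
  by rewrite -{1}Er !wbar_cat !wbarK // !dstar_cat P2 dstar_ypow.
have Pump : forall (B0 c : nat), exists l1 l2, [/\ B0 <= l1, l1 + c < l2 &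
      dstar (dinit D) (x ++ ypow y l1) = dstar (dinit D) (x ++ ypow y l2)].
  move=> B0 c.
  have [t1 [t2 [/andP [H12 _] E]]] :=
    pigeon_nat (fun t => dstar (dinit D) (x ++ ypow y (B0 + t * c.+1))) (ltnSn #|dstate D|).
  exists (B0 + t1 * c.+1), (B0 + t2 * c.+1); split=> //; first exact: leq_addr.
  have : t1.+1 * c.+1 <= t2 * c.+1 by rewrite leq_mul2r.
  rewrite mulSn; lia.
have Dsw : forall k k' l, dstar (dinit D) (x ++ ypow y k) = dstar (dinit D) (x ++ ypow y k') ->
    hairpin bar kappa L1 L2 (W x y r b k l) -> hairpin bar kappa L1 L2 (W x y r b k' l).
  move=> k k' l E /HD; rewrite /dlang W_split dstar_cat E -dstar_cat -W_split => H.
  by apply/HD.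
have Ylk : forall l k, k <= l -> l * size y >= k * size y + (l - k).
  move=> l k Hkl; have -> : l = k + (l - k) by lia.
  rewrite mulnDl leq_add2l addKn; exact: leq_pmulr.
case: Hfin => [/fin_bound [M HM0] | /fin_bound [M HM0]].
-
  have HM : forall w : seq S, L1 w -> size w <= M := HM0.
  have [l1 [l2 [HB Hc12 E]]] := Pump (M.*2.+1) (size b).
  have Hh := Dsw _ _ l1 E (Win l1).
  move: Hh => [g [a [b0 [EW [Ha HL]]]]].
  have SW := size_W x y r b l2 l1.
  have SH := size_hp g a b0; rewrite -EW SW !mulnDl in SH.
  have Y1 : l1 <= l1 * size y by apply: leq_pmulr.
  have Y2 : l2 <= l2 * size y by apply: leq_pmulr.
  have Yl := Ylk l2 l1 (ltnW (leq_ltn_trans (leq_addr _ _) Hc12)).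
  case: HL => HL.
    have := HM _ HL; rewrite !size_cat size_wbar => HMs.
    move: HB; rewrite -muln2; lia.
  move/(L2E Hbar HA2): HL; rewrite /dlang.
  have -> : wb (a ++ b0 ++ wb a ++ wb g) = (g ++ a ++ wb b0 ++ wb a) by rewrite !wbar_cat !wbarK // -!catA.
  have EW' : wb (W x y r b l2 l1) = (g ++ a ++ wb b0 ++ wb a) ++ wb g.
    by rewrite EW !wbar_cat !wbarK // -!catA.
  have Ep : g ++ a ++ wb b0 ++ wb a = take (size (g ++ a ++ wb b0 ++ wb a)) (wb (W x y r b l2 l1)).
    by rewrite EW' take_size_cat.
  rewrite {1}Ep Wwb.
  apply/negP; apply: NP2; rewrite !size_cat !size_wbar; lia.
-
  have HM : forall w : seq S, L2 w -> size w <= M := HM0.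
  have [l1 [l2 [HB Hc12 E]]] := Pump (M.*2.+1) (size b).
  have Hh := Dsw _ _ l2 (esym E) (Win l2).
  move: Hh => [g [a [b0 [EW [Ha HL]]]]].
  have SW := size_W x y r b l1 l2.
  have SH := size_hp g a b0; rewrite -EW SW !mulnDl in SH.
  have Y1 : l1 <= l1 * size y by apply: leq_pmulr.
  have Y2 : l2 <= l2 * size y by apply: leq_pmulr.
  have Yl := Ylk l2 l1 (ltnW (leq_ltn_trans (leq_addr _ _) Hc12)).
  case: HL => HL; last first.
    have := HM _ HL; rewrite !size_cat !size_wbar => HMs.
    move: HB; rewrite -muln2; lia.
  move/HA1: HL; rewrite /dlang.
  have EW2 : W x y r b l1 l2 = (g ++ a ++ b0 ++ wb a) ++ wb g by rewrite EW -!catA.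
  have Ep : g ++ a ++ b0 ++ wb a = take (size (g ++ a ++ b0 ++ wb a)) (W x y r b l1 l2).
    by rewrite EW2 take_size_cat.
  rewrite {1}Ep.
  apply/negP; apply: NP1; rewrite !size_cat !size_wbar; lia.
Qed.

Lemma part2 : ~ finite_lang (nfa_lang bar kappa A1 A2) ->
  finite_lang L1 \/ finite_lang L2 -> ~ regular (hairpin bar kappa L1 L2).
Proof.
move=> Hinf Hfin.
pose T : finType := ((dstate A1 * dstate A2) * dstate A1 * dstate A2)%type.
have [u [Hu Hsz]] := long_word Hinf (#|T| + kappa + 1).
have [b Hb] : exists w, cnt bar kappa q01 q02 w u 0 by apply/(nfa_langE Hbar Hkappa).
move: Hb; rewrite /cnt /= => -[Hk Hc Hn].
pose q1n := dstar q01 (u ++ b); pose q2n := dstar q02 (u ++ wb b).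
pose f i : T := ((dstar q01 (take i u), dstar q02 (take i u)),
                 dstar q1n (wb (drop i u)), dstar q2n (wb (drop i u))).
have [i [j [/andP [Hij Hjm] Ef]]] : exists i j, i < j < size u - kappa /\ f i = f j.
  by apply: pigeon_nat; lia.
pose x := take i u; pose y := drop i (take j u); pose r := drop j u.
have Exy : x ++ y = take j u by rewrite /x -(@take_takel _ i j u (ltnW Hij)) cat_take_drop.
have Eu : x ++ y ++ r = u by rewrite catA Exy cat_take_drop.
have Sx : size x = i by rewrite size_take; case: ltnP => //; lia.
have Sy : size y = j - i by rewrite size_drop size_take; case: ltnP => //; lia.
have Sr : size r = size u - j by rewrite size_drop.
have Ed : drop i u = y ++ r by rewrite -Eu -Sx drop_size_cat.
case: Ef => E1 E2 E3 E4.
apply: (@core x y r b) => //.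
- by rewrite Sy; lia.
- by rewrite Sr; lia.
- by rewrite -dstar_cat Exy.
- by rewrite -dstar_cat Exy.
- by move: E3; rewrite /q1n Ed -/r wbar_cat dstar_cat -Eu -!catA.
- by move: E4; rewrite /q2n Ed -/r wbar_cat dstar_cat -Eu -!catA.
- by rewrite Eu.
- by rewrite Eu.
Qed.

End Part2.

Theorem proposition1 (S : finType) (bar : S -> S) (Hbar : involutive bar)
  (HS : 1 < #|S|) (kappa : nat) (Hkappa : 0 < kappa)
  (L1 L2 : language S) (A1 A2 : dfa S)
  (HA1 : forall w, dlang A1 w <-> L1 w)
  (HA2 : forall w, dlang A2 w <-> exists v, L2 v /\ w = wbar bar v) :
  (finite_lang (nfa_lang bar kappa A1 A2) -> regular (hairpin bar kappa L1 L2)) /\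
  (~ finite_lang (nfa_lang bar kappa A1 A2) ->
     finite_lang L1 \/ finite_lang L2 -> ~ regular (hairpin bar kappa L1 L2)).
Proof.
split.
- exact: (part1 Hbar Hkappa HA1 HA2).
- exact: (part2 Hbar Hkappa HA1 HA2).
Qed.
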